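(* Let $(F,C,(u_f)_{f\in F},d,k)$ be an instance of Capacitated $k$-Median. Let $A\subseteq F$ be a set of at most $\ell$ facilities (a solution to Uncapacitated $k$-Median opening at most $\ell\ge k$ facilities), and let $\mathrm{cost}_d(A)=\sum_{c\in C}\min_{f\in A} d(c,f)$. Construct the $\ell$-centered metric $d_\ell$ from $A$ as follows: for each $f\in A$ create a new point $s^f$ (a center) with $d(s^f,f)=0$, extending $d$ naturally to $F\cup C\cup S$ where $S=\{s^f: f\in A\}$; build a weighted graph on $F\cup C\cup S$ consisting of a complete graph on $S$ with edge lengths given by $d$, and, for every $v\in F\cup C$, a single edge from $v$ to a center $s^v\in S$ closest to $v$ (with respect to the extended $d$), of length $d(v,s^v)$; let $d_\ell$ be the shortest-path metric of this graph. Let $\phi^*$ be the assignment of an optimal solution of the Capacitated $k$-Median instance with metric $d$, and for a metric $d'$ write $\mathrm{cost}(\phi^*,d')=\sum_{c\in C}d'(c,\phi^*(c))$. Then $$\mathrm{cost}(\phi^*,d)\le \mathrm{cost}(\phi^*,d_\ell)\le 3\,\mathrm{cost}(\phi^*,d)+4\,\mathrm{cost}_d(A).$$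
   Context: Capacitated $k$-Median: given facilities $F$ with capacities $u_f\in\mathbb{Z}_{\ge0}$, clients $C$, a metric $d$ on $F\cup C$ and an integer $k$; a feasible solution is a set of at most $k$ open facilities and an assignment $\phi$ of clients to open facilities with at most $u_f$ clients assigned to each open $f$; the cost is $\sum_{c}d(c,\phi(c))$, to be minimized. *)

(* Defs.v *)
From HB Require Import structures.
From mathcomp Require Import all_boot all_order all_algebra.
From mathcomp Require Import boolp classical_sets reals.
Set Implicit Arguments. Unset Strict Implicit. Unset Printing Implicit Defensive.
Import Order.TTheory GRing.Theory Num.Theory.
Local Open Scope ring_scope.
Local Open Scope classical_set_scope.

Definition is_metric (R : realType) (P : Type) (d : P -> P -> R) : Prop :=
  (forall x, d x x = 0) /\ (forall x y, d x y = d y x) /\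
  (forall x y z, d x z <= d x y + d y z).

Definition pt (F C : finType) := (F + C)%type.

Definition ckm_feasible (F C : finType) (u : F -> nat) (k : nat)
  (X : {set F}) (phi : C -> F) : Prop :=
  [/\ (#|X| <= k)%N, (forall c, phi c \in X) &
      (forall f, (#|[set c | phi c == f]| <= u f)%N)].

Definition asg_cost (R : realType) (F C : finType) (d : pt F C -> pt F C -> R)
  (phi : C -> F) : R := \sum_(c : C) d (inr c) (inl (phi c)).

Definition ckm_optimal (R : realType) (F C : finType) (d : pt F C -> pt F C -> R)
  (u : F -> nat) (k : nat) (X : {set F}) (phi : C -> F) : Prop :=
  ckm_feasible u k X phi /\
  forall X' phi', ckm_feasible u k X' phi' -> asg_cost d phi <= asg_cost d phi'.

Definition dist_to (R : realType) (F C : finType) (d : pt F C -> pt F C -> R)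
  (A : {set F}) (p : pt F C) : R :=
  inf [set d p (inl f) | f in [set f | f \in A]].

Definition costA (R : realType) (F C : finType) (d : pt F C -> pt F C -> R)
  (A : {set F}) : R := \sum_(c : C) dist_to d A (inr c).

Definition center (F : finType) (A : {set F}) := {f : F | f \in A}.

Definition vtx (F C : finType) (A : {set F}) := (pt F C + center A)%type.

Section Graph.
Variables (R : realType) (F C : finType) (d : pt F C -> pt F C -> R)
  (A : {set F}) (sigma : pt F C -> center A).
(* sigma v : a closest center s^v to v. *)

Definition gedge (x y : vtx C A) : bool :=
  match x, y with
  | inr s, inr t => s != t
  | inl v, inr s => s == sigma v
  | inr s, inl v => s == sigma v
  | inl _, inl _ => false
  end.

(* Edge lengths, given by the extension of d with d(s^f, .) = d(f, .). *)
Definition glen (x y : vtx C A) : R :=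
  match x, y with
  | inr s, inr t => d (inl (val s)) (inl (val t))
  | inl v, inr s => d v (inl (val s))
  | inr s, inl v => d v (inl (val s))
  | inl _, inl _ => 0
  end.

Fixpoint wlen (x : vtx C A) (p : seq (vtx C A)) : R :=
  match p with
  | [::] => 0
  | y :: q => glen x y + wlen y q
  end.

Definition spdist (x y : vtx C A) : R :=
  inf [set wlen x p | p in [set p | path gedge x p && (last x p == y)]].

Definition d_ell (v w : pt F C) : R := spdist (inl v) (inl w).
End Graph.

Definition closest_center (R : realType) (F C : finType)
  (d : pt F C -> pt F C -> R) (A : {set F}) (sigma : pt F C -> center A) : Prop :=
  forall v f, f \in A -> d v (inl (val (sigma v))) <= d v (inl f).

(* Main.v *)
Require Import Defs.
From HB Require Import structures.
From mathcomp Require Import all_boot all_order all_algebra.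
From mathcomp Require Import boolp classical_sets reals.
From mathcomp Require Import lra.
Import Order.TTheory GRing.Theory Num.Theory.
Local Open Scope ring_scope.
Local Open Scope classical_set_scope.

Section Aux.
Variables (R : realType) (F C : finType) (d : pt F C -> pt F C -> R)
  (A : {set F}) (sigma : pt F C -> center A).
Hypothesis hd : is_metric d.

Definition vpt (x : vtx C A) : pt F C :=
  match x with inl v => v | inr s => inl (val s) end.

Lemma d_ge0 x y : 0 <= d x y.
Proof.
case: hd => h0 [hs ht]; have := ht x y x; rewrite h0 (hs y x).
by move=> h; rewrite -(@pmulr_rge0 _ 2) // mulr2n mulrDl !mul1r.
Qed.

Lemma glen_pt x y : gedge sigma x y -> glen d x y = d (vpt x) (vpt y).
Proof.
case: hd => h0 [hs ht].
by case: x => [v|s]; case: y => [w|t] //= _; rewrite hs.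
Qed.

Lemma wlen_lb x p : path (gedge sigma) x p ->
  d (vpt x) (vpt (last x p)) <= wlen d x p.
Proof.
case: hd => h0 [hs ht].
elim: p x => [|y p IH] x /=; first by rewrite h0.
move=> /andP[exy hp]; rewrite glen_pt //.
apply: (le_trans (ht _ (vpt y) _)); apply: lerD => //; exact: IH.
Qed.

Lemma wlen_ge0 x p : path (gedge sigma) x p -> 0 <= wlen d x p.
Proof.
move=> hp; exact: (le_trans (d_ge0 _ _) (wlen_lb _ _ hp)).
Qed.

Lemma spdist_lb x y : has_lbound
  [set wlen d x p | p in [set p | path (gedge sigma) x p && (last x p == y)]].
Proof.
by exists 0 => z [p /andP[hp _] <-]; exact: wlen_ge0 _ _ hp.
Qed.
End Aux.

Theorem lemma2 (R : realType) (F C : finType) (u : F -> nat)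
  (d : pt F C -> pt F C -> R) (k ell : nat) (A : {set F})
  (sigma : pt F C -> center A) (X : {set F}) (phi : C -> F) :
  is_metric d ->
  (0 < #|A|)%N -> (#|A| <= ell)%N -> (k <= ell)%N ->
  closest_center d sigma ->
  ckm_optimal d u k X phi ->
  asg_cost d phi <= asg_cost (d_ell d sigma) phi /\
  asg_cost (d_ell d sigma) phi <= 3 * asg_cost d phi + 4 * costA d A.
Proof.
move=> hd _ _ _ hcl _.
have hd' := hd; case: hd' => h0 [hs ht].
have walk : forall v w : pt F C, exists p,
    [/\ path (gedge sigma) (inl v) p, last (inl v) p == inl w &
     wlen d (inl v) p = d v (inl (val (sigma v))) +
        d (inl (val (sigma v))) (inl (val (sigma w))) + d w (inl (val (sigma w)))].
  move=> v w; case: (eqVneq (sigma v) (sigma w)) => e.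
  - exists [:: inr (sigma v); inl w]; split => //=.
    + by rewrite eqxx /= e eqxx.
    + by rewrite e h0 addr0 addr0 -e.
  - exists [:: inr (sigma v); inr (sigma w); inl w]; split => //=.
    + by rewrite eqxx e /= eqxx.
    + by rewrite addr0 addrA.
have dell_ub : forall v w : pt F C, d_ell d sigma v w <=
    d v (inl (val (sigma v))) +
    d (inl (val (sigma v))) (inl (val (sigma w))) + d w (inl (val (sigma w))).
  move=> v w; have [p [hp hl hw]] := walk v w; rewrite -hw.
  apply: (ge_inf (@spdist_lb _ _ _ d A sigma hd _ _)); exists p => //; by rewrite /= hp hl.
have dell_lb : forall v w : pt F C, d v w <= d_ell d sigma v w.
  move=> v w; apply: lb_le_inf.
    have [p [hp hl _]] := walk v w.
    by exists (wlen d (inl v) p), p => //=; rewrite hp hl.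
  move=> z [p /andP[hp /eqP hl] <-].
  by have := @wlen_lb _ _ _ d A sigma hd _ _ hp; rewrite hl.
have hdist : forall c : C, d (inr c) (inl (val (sigma (inr c)))) <= dist_to d A (inr c).
  move=> c; apply: lb_le_inf.
    exists (d (inr c) (inl (val (sigma (inr c))))), (val (sigma (inr c))) => //=;
      exact: (valP (sigma (inr c))).
  by move=> z [f fA <-]; exact: hcl.
split.
  by rewrite /asg_cost; apply: ler_sum => c _; exact: dell_lb.
rewrite /asg_cost /costA !mulr_sumr -big_split /=; apply: ler_sum => c _.
set f := phi c.
set sc := inl (val (sigma (inr c))) : pt F C.
set sf := inl (val (sigma (inl f))) : pt F C.
apply: le_trans (dell_ub _ _) _.
have e1 : d sc sf <= d sc (inr c) + d (inr c) (inl f) + d (inl f) sf.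
  apply: le_trans (ht _ (inl f) _) _; apply: lerD => //; exact: ht.
have e2 : d (inl f) sf <= d (inl f) (inr c) + d (inr c) sc.
  apply: le_trans (ht _ (inr c) _); apply: hcl; exact: (valP (sigma (inr c))).
have := hdist c; rewrite -/sc => e3.
rewrite (hs sc) (hs (inl f)) in e1 e2 *.
rewrite (hs sc (inr c)) in e1; rewrite (hs (inl f) (inr c)) in e2.
lra.
Qed.
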